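(* Let $I=(0,1)$, $\nu>0$, $\gamma>1$, $\rho_0\in C(\bar I)$ with $\rho_0>0$ in $I$, $\rho_0=0$ on $\partial I$, and $v_0=u_0$ continuous on $\bar I$. Suppose that there exist positive $\lambda_1,\lambda_2,\lambda_3,\lambda_4$ with $0<\lambda_3,\lambda_4<1$ such that either ($\frac{(\rho_0)_x}{\rho_0}\ge\lambda_1$ in $(0,\lambda_3)$, $v_0(\lambda_3)<0$, $v_0\le0$ in $(0,\lambda_3)$) or ($\frac{(\rho_0)_x}{\rho_0}\le-\lambda_2$ in $(\lambda_4,1)$, $v_0(\lambda_4)>0$, $v_0\ge0$ in $(\lambda_4,1)$). Then for every $T>0$ the problem $$\rho_0 v_t+\Big(\frac{\rho_0^\gamma}{\eta_x^\gamma}\Big)_x=\nu\Big(\frac{v_x}{\eta_x}\Big)_x\ \text{ in } I\times(0,T],\qquad \eta_t=v,$$ $$(v,\eta)=(u_0,x)\text{ on }I\times\{t=0\},\qquad v=v_x=0\text{ on }\partial I\times(0,T],$$ has no solution $(v,\eta)$ in $C^{2,1}(\bar I\times[0,T])$.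
   Context: $C^{2,1}(\bar I\times[0,T])$ denotes functions that are $C^2$ in $x$ and $C^1$ in $t$ on $\bar I\times[0,T]$. *)

(* Defs.v *)
From Stdlib Require Import Reals Lra.
Open Scope R_scope.

Definition deriv_within (g : R -> R) (a b x l : R) : Prop :=
  forall eps, 0 < eps -> exists delta, 0 < delta /\
    forall h, h <> 0 -> Rabs h < delta -> a <= x + h <= b ->
      Rabs ((g (x + h) - g x) / h - l) < eps.

Definition cont_on_interval (g : R -> R) (a b : R) : Prop :=
  forall x, a <= x <= b -> forall eps, 0 < eps -> exists delta, 0 < delta /\
    forall y, a <= y <= b -> Rabs (y - x) < delta -> Rabs (g y - g x) < eps.

Definition in_rect (T x t : R) : Prop := 0 <= x <= 1 /\ 0 <= t <= T.

Definition cont_rect (f : R -> R -> R) (T : R) : Prop :=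
  forall x t, in_rect T x t -> forall eps, 0 < eps -> exists delta, 0 < delta /\
    forall y s, in_rect T y s -> Rabs (y - x) < delta -> Rabs (s - t) < delta ->
      Rabs (f y s - f x t) < eps.

Definition C21_with (f fx fxx ft : R -> R -> R) (T : R) : Prop :=
  (forall x t, in_rect T x t -> deriv_within (fun y => f y t) 0 1 x (fx x t)) /\
  (forall x t, in_rect T x t -> deriv_within (fun y => fx y t) 0 1 x (fxx x t)) /\
  (forall x t, in_rect T x t -> deriv_within (fun s => f x s) 0 T t (ft x t)) /\
  cont_rect f T /\ cont_rect fx T /\ cont_rect fxx T /\ cont_rect ft T.

(* (v, eta) in C^{2,1} solves the problem on [0,T]; the partial derivatives
   are given explicitly (they are uniquely determined by v, eta). *)
Definition is_solution (nu gamma : R) (rho0 u0 : R -> R) (T : R)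
  (v eta : R -> R -> R) : Prop :=
  exists vx vxx vt ex exx et : R -> R -> R,
    C21_with v vx vxx vt T /\ C21_with eta ex exx et T /\
    (* eta_x > 0 where the equation is posed, so that eta_x^gamma is defined *)
    (forall x t, 0 < x < 1 -> 0 < t <= T -> 0 < ex x t) /\
    (forall x t, 0 < x < 1 -> 0 < t <= T ->
       exists P Q,
         derivable_pt_lim (fun y => Rpower (rho0 y) gamma / Rpower (ex y t) gamma) x P /\
         derivable_pt_lim (fun y => vx y t / ex y t) x Q /\
         rho0 x * vt x t + P = nu * Q) /\
    (forall x t, 0 < x < 1 -> 0 < t <= T -> et x t = v x t) /\
    (forall x, 0 < x < 1 -> v x 0 = u0 x /\ eta x 0 = x) /\
    (forall t, 0 < t <= T ->
       v 0 t = 0 /\ vx 0 t = 0 /\ v 1 t = 0 /\ vx 1 t = 0).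

(* Main.v *)
Require Import Defs.
From Stdlib Require Import Reals Lra ClassicalEpsilon Classical.
From Coquelicot Require Import Coquelicot.
Open Scope R_scope.

Lemma abs_small_zero : forall d, (forall e, 0 < e -> Rabs d < e) -> d = 0.
Proof.
  intros d H. destruct (Req_dec d 0) as [|Hn]; auto.
  exfalso. assert (0 < Rabs d) by (apply Rabs_pos_lt; auto).
  specialize (H (Rabs d) H0). lra.
Qed.

Lemma UC_rect : forall f T, cont_rect f T -> forall eps, 0 < eps ->
  exists d, 0 < d /\ forall x t y s, in_rect T x t -> in_rect T y s ->
    Rabs (x - y) < d -> Rabs (t - s) < d -> Rabs (f x t - f y s) < eps.
Proof.
  intros f T Hc eps He.
  set (Pr := fun u v (d : posreal) => in_rect T u v -> forall y s, in_rect T y s ->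
     Rabs (y - u) < 2 * d -> Rabs (s - v) < 2 * d -> Rabs (f y s - f u v) < eps / 2).
  assert (Hex : forall u v, exists d : posreal, Pr u v d).
  { intros u v. destruct (classic (in_rect T u v)) as [Hin|Hn].
    - destruct (Hc u v Hin (eps/2)) as [dl [Hdl Hd]]; [lra|].
      assert (Hp : 0 < dl / 2) by lra.
      exists (mkposreal _ Hp). intros _ y s Hy H1 H2. simpl in *.
      apply Hd; auto; lra.
    - exists (mkposreal 1 Rlt_0_1). intros Hin; contradiction. }
  set (g := fun u v => epsilon (inhabits (mkposreal 1 Rlt_0_1)) (Pr u v)).
  assert (Hg : forall u v, Pr u v (g u v)) by (intros; apply epsilon_spec; apply Hex).
  destruct (compactness_value_2d 0 1 0 T g) as [d Hd].
  exists d. split; [apply cond_pos|].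
  intros x t y s Hxt Hys H1 H2.
  apply NNPP; intro Hn.
  apply (Hd x t (proj1 Hxt) (proj2 Hxt)).
  intros [u [v [Hu [Hv [Hxu [Htv Hdd]]]]]].
  apply Hn.
  assert (Huv : in_rect T u v) by (split; auto).
  assert (A1 := Hg u v Huv x t Hxt).
  assert (A2 := Hg u v Huv y s Hys).
  assert (0 < g u v) by apply cond_pos.
  assert (B1 : Rabs (f x t - f u v) < eps/2) by (apply A1; lra).
  assert (B2 : Rabs (f y s - f u v) < eps/2).
  { apply A2.
    - apply Rle_lt_trans with (Rabs (y - x) + Rabs (x - u)).
      replace (y - u) with ((y - x) + (x - u)) by ring. apply Rabs_triang.
      rewrite Rabs_minus_sym. lra.
    - apply Rle_lt_trans with (Rabs (s - t) + Rabs (t - v)).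
      replace (s - v) with ((s - t) + (t - v)) by ring. apply Rabs_triang.
      rewrite (Rabs_minus_sym s). lra. }
  replace (f x t - f y s) with ((f x t - f u v) - (f y s - f u v)) by ring.
  apply Rle_lt_trans with (Rabs (f x t - f u v) + Rabs (f y s - f u v)).
  unfold Rminus at 1; eapply Rle_trans; [apply Rabs_triang|]; rewrite Rabs_Ropp; lra.
  lra.
Qed.
Definition clamp a b y := Rmax a (Rmin b y).

Lemma clamp_prop : forall a b y c, a <= b -> a <= c <= b ->
  a <= clamp a b y <= b /\ Rabs (clamp a b y - c) <= Rabs (y - c).
Proof.
  intros a b y c Hab Hc. unfold clamp, Rmax, Rmin.
  destruct (Rle_dec b y); destruct (Rle_dec a _);
  unfold Rabs; repeat destruct Rcase_abs; split; lra.
Qed.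

Lemma clamp_id : forall a b y, a <= y <= b -> clamp a b y = y.
Proof. intros. unfold clamp, Rmax, Rmin. destruct (Rle_dec b y); destruct (Rle_dec a _); lra. Qed.

Lemma EVT_max : forall g a b, a <= b -> cont_on_interval g a b ->
  exists xm, a <= xm <= b /\ forall y, a <= y <= b -> g y <= g xm.
Proof.
  intros g a b Hab Hc.
  set (h := fun y => g (clamp a b y)).
  destruct (continuity_ab_maj h a b Hab) as [M [HM HMi]].
  - intros c Hc0. unfold continuity_pt, continue_in, limit1_in, limit_in.
    intros eps He. destruct (Hc c Hc0 eps He) as [d [Hd Hd2]].
    exists d. split; auto. intros x [_ Hx]. simpl in *. unfold R_dist in *.
    unfold h. rewrite (clamp_id a b c Hc0).
    destruct (clamp_prop a b x c Hab Hc0) as [H1 H2].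
    apply Hd2; auto. lra.
  - exists M. split; auto. intros y Hy. specialize (HM y Hy). unfold h in HM.
    rewrite !clamp_id in HM; auto.
Qed.

Lemma EVT_min : forall g a b, a <= b -> cont_on_interval g a b ->
  exists xm, a <= xm <= b /\ forall y, a <= y <= b -> g xm <= g y.
Proof.
  intros g a b Hab Hc.
  destruct (EVT_max (fun y => - g y) a b Hab) as [m [Hm H]].
  - intros x Hx e He. destruct (Hc x Hx e He) as [d [Hd H]]. exists d; split; auto.
    intros y Hy Hyx. specialize (H y Hy Hyx).
    replace (- g y - - g x) with (- (g y - g x)) by ring. rewrite Rabs_Ropp; auto.
  - exists m; split; auto. intros y Hy; specialize (H y Hy); lra.
Qed.

Lemma max_2d : forall f T L t0, cont_rect f T -> 0 <= L <= 1 -> 0 <= t0 <= T ->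
  exists xs ts, 0 <= xs <= L /\ 0 <= ts <= t0 /\
    forall x t, 0 <= x <= L -> 0 <= t <= t0 -> f x t <= f xs ts.
Proof.
  intros f T L t0 Hc HL Ht0.
  assert (Hx : forall t, 0 <= t <= t0 -> cont_on_interval (fun x => f x t) 0 L).
  { intros t Ht x Hxi e He.
    destruct (Hc x t ltac:(split; lra) e He) as [d [Hd H]]. exists d; split; auto.
    intros y Hy Hyx. apply H; auto. split; lra. rewrite Rminus_diag, Rabs_R0; auto. }
  set (Pm := fun t m => (forall x, 0 <= x <= L -> f x t <= m) /\
                        exists x, 0 <= x <= L /\ f x t = m).
  set (phi := fun t => epsilon (inhabits 0) (Pm t)).
  assert (Hphi : forall t, 0 <= t <= t0 -> Pm t (phi t)).
  { intros t Ht. apply epsilon_spec.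
    destruct (EVT_max (fun x => f x t) 0 L (proj1 HL) (Hx t Ht)) as [xm [Hxm H]].
    exists (f xm t). split; auto. exists xm; auto. }
  destruct (EVT_max phi 0 t0 (proj1 Ht0)) as [ts [Hts Hmax]].
  - intros t Ht e He.
    destruct (UC_rect f T Hc (e/2) ltac:(lra)) as [d [Hd H]].
    exists d; split; auto. intros s Hs Hst.
    destruct (Hphi t Ht) as [Ht1 [x1 [Hx1 E1]]].
    destruct (Hphi s Hs) as [Hs1 [x2 [Hx2 E2]]].
    assert (R1 : f x2 s - f x2 t < e/2).
    { assert (Rabs (f x2 s - f x2 t) < e/2).
      apply H; try (split; lra). rewrite Rminus_diag, Rabs_R0; auto. auto.
      apply Rabs_def2 in H0. lra. }
    assert (R2 : f x1 t - f x1 s < e/2).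
    { assert (Rabs (f x1 t - f x1 s) < e/2).
      apply H; try (split; lra). rewrite Rminus_diag, Rabs_R0; auto.
      rewrite Rabs_minus_sym; auto.
      apply Rabs_def2 in H0. lra. }
    specialize (Ht1 x2 Hx2). specialize (Hs1 x1 Hx1).
    apply Rabs_def1; lra.
  - destruct (Hphi ts Hts) as [H1 [xs [Hxs E]]].
    exists xs, ts. repeat split; try lra.
    intros x t Hxx Ht. destruct (Hphi t Ht) as [H2 _].
    specialize (H2 x Hxx). specialize (Hmax t Ht). lra.
Qed.
Lemma dw_interior : forall g a b x l, deriv_within g a b x l -> a < x < b ->
  derivable_pt_lim g x l.
Proof.
  intros g a b x l H Hx eps He.
  destruct (H eps He) as [d [Hd H2]].
  assert (Hp : 0 < Rmin d (Rmin (x - a) (b - x))).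
  { repeat apply Rmin_pos; lra. }
  exists (mkposreal _ Hp). intros h Hh Hha. simpl in Hha.
  assert (Rabs h < d) by (eapply Rlt_le_trans; [apply Hha| apply Rmin_l]).
  assert (Rabs h < Rmin (x - a) (b - x)) by (eapply Rlt_le_trans; [apply Hha| apply Rmin_r]).
  assert (Rabs h < x - a) by (eapply Rlt_le_trans; [apply H1| apply Rmin_l]).
  assert (Rabs h < b - x) by (eapply Rlt_le_trans; [apply H1| apply Rmin_r]).
  apply H2; auto. apply Rabs_def2 in H3. apply Rabs_def2 in H4. lra.
Qed.

Lemma dw_affine : forall g a b x l al be, deriv_within g a b x l -> a < x < b ->
  (forall y, a < y < b -> g y = al * y + be) -> l = al.
Proof.
  intros g a b x l al be H Hx Hg.
  assert (Hd := dw_interior g a b x l H Hx).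
  symmetry. apply Rminus_diag_uniq. apply abs_small_zero. intros e He.
  destruct (Hd e He) as [d Hd2].
  assert (Hp : 0 < Rmin (d/2) (Rmin ((x - a)/2) ((b - x)/2))).
  { repeat apply Rmin_pos; destruct d; simpl; lra. }
  set (h := Rmin (d/2) (Rmin ((x - a)/2) ((b - x)/2))) in *.
  assert (h <= d/2) by apply Rmin_l.
  assert (h <= (x-a)/2) by (eapply Rle_trans; [apply Rmin_r|apply Rmin_l]).
  assert (h <= (b-x)/2) by (eapply Rle_trans; [apply Rmin_r|apply Rmin_r]).
  assert (0 < d) by apply cond_pos.
  specialize (Hd2 h ltac:(lra)). rewrite Rabs_pos_eq in Hd2 by lra.
  specialize (Hd2 ltac:(lra)).
  rewrite (Hg (x+h)), (Hg x) in Hd2 by lra.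
  replace ((al * (x + h) + be - (al * x + be)) / h) with al in Hd2 by (field; lra).
  auto.
Qed.

Lemma dw_ext : forall f g a b x l l', a <= x <= b -> deriv_within f a b x l ->
  (forall y, a <= y <= b -> g y = f y) -> l' = l -> deriv_within g a b x l'.
Proof.
  intros f g a b x l l' Hx H E El eps He. destruct (H eps He) as [d [Hd H2]].
  exists d; split; auto. intros h Hh Hhd Hr.
  subst. rewrite !E; auto.
Qed.

Lemma dw_plus : forall f g a b x l1 l2, deriv_within f a b x l1 -> deriv_within g a b x l2 ->
  deriv_within (fun y => f y + g y) a b x (l1 + l2).
Proof.
  intros f g a b x l1 l2 H1 H2 eps He.
  destruct (H1 (eps/2) ltac:(lra)) as [d1 [Hd1 K1]].
  destruct (H2 (eps/2) ltac:(lra)) as [d2 [Hd2 K2]].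
  exists (Rmin d1 d2). split. apply Rmin_pos; auto.
  intros h Hh Hhd Hr.
  assert (Rabs h < d1) by (eapply Rlt_le_trans; [apply Hhd|apply Rmin_l]).
  assert (Rabs h < d2) by (eapply Rlt_le_trans; [apply Hhd|apply Rmin_r]).
  specialize (K1 h Hh H Hr). specialize (K2 h Hh H0 Hr).
  replace ((f (x + h) + g (x + h) - (f x + g x)) / h - (l1 + l2)) with
    (((f (x + h) - f x) / h - l1) + ((g (x + h) - g x) / h - l2)) by (field; auto).
  eapply Rle_lt_trans; [apply Rabs_triang|]. lra.
Qed.

Lemma dw_scal : forall f a b x l c, deriv_within f a b x l ->
  deriv_within (fun y => c * f y) a b x (c * l).
Proof.
  intros f a b x l c H eps He.
  destruct (H (eps / (Rabs c + 1))) as [d [Hd K]].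
  { apply Rdiv_lt_0_compat; auto. pose proof (Rabs_pos c); lra. }
  exists d; split; auto. intros h Hh Hhd Hr. specialize (K h Hh Hhd Hr).
  replace ((c * f (x + h) - c * f x) / h - c * l) with (c * ((f (x + h) - f x) / h - l)) by (field; auto).
  rewrite Rabs_mult. pose proof (Rabs_pos c).
  apply Rle_lt_trans with ((Rabs c + 1) * Rabs ((f (x + h) - f x) / h - l)).
  apply Rmult_le_compat_r; [apply Rabs_pos|lra].
  apply Rmult_lt_reg_l with (/ (Rabs c + 1)). apply Rinv_0_lt_compat; lra.
  rewrite <- Rmult_assoc, Rinv_l by lra. rewrite Rmult_1_l.
  unfold Rdiv in K. rewrite Rmult_comm. auto.
Qed.

Lemma dw_affine_fun : forall a b x al be, deriv_within (fun y => al * y + be) a b x al.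
Proof.
  intros a b x al be eps He. exists 1; split; [lra|]. intros h Hh _ _.
  replace ((al * (x + h) + be - (al * x + be)) / h - al) with 0 by (field; auto).
  rewrite Rabs_R0; auto.
Qed.

Lemma dpl_ext : forall f g x l, derivable_pt_lim f x l -> (forall y, g y = f y) ->
  derivable_pt_lim g x l.
Proof. intros f g x l H E eps He. destruct (H eps He) as [d K]. exists d.
  intros h Hh Hd. rewrite !E. auto. Qed.

Lemma dpl_quad : forall p q r x, derivable_pt_lim (fun y => p * (y * y) + q * y + r) x (2 * p * x + q).
Proof.
  intros p q r x eps He.
  assert (Hp : 0 < eps / (Rabs p + 1)).
  { apply Rdiv_lt_0_compat; auto. pose proof (Rabs_pos p); lra. }
  exists (mkposreal _ Hp). intros h Hh Hd. simpl in Hd.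
  replace ((p * ((x + h) * (x + h)) + q * (x + h) + r - (p * (x * x) + q * x + r)) / h -
     (2 * p * x + q)) with (p * h) by (field; auto).
  rewrite Rabs_mult. pose proof (Rabs_pos p).
  apply Rle_lt_trans with ((Rabs p + 1) * Rabs h).
  apply Rmult_le_compat_r; [apply Rabs_pos|lra].
  apply Rmult_lt_reg_l with (/ (Rabs p + 1)). apply Rinv_0_lt_compat; lra.
  rewrite <- Rmult_assoc, Rinv_l by lra. rewrite Rmult_1_l.
  unfold Rdiv in Hd. rewrite Rmult_comm. auto.
Qed.

Lemma max_deriv0 : forall g a b x l, derivable_pt_lim g x l -> a < x < b ->
  (forall y, a < y < b -> g y <= g x) -> l = 0.
Proof.
  intros g a b x l H Hx Hm.
  assert (pr : derivable_pt g x) by (exists l; auto).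
  pose proof (deriv_maximum g a b x pr (proj1 Hx) (proj2 Hx) (fun y H1 H2 => Hm y (conj H1 H2))).
  rewrite <- H0. symmetry. apply derive_pt_eq_0. auto.
Qed.

Lemma max_deriv2 : forall g g' a b x l2,
  (forall y, a < y < b -> derivable_pt_lim g y (g' y)) -> a < x < b -> g' x = 0 ->
  derivable_pt_lim g' x l2 -> (forall y, a < y < b -> g y <= g x) -> l2 <= 0.
Proof.
  intros g g' a b x l2 Hd Hx H0 H2 Hm.
  destruct (Rle_lt_dec l2 0) as [|Hl]; auto. exfalso.
  destruct (H2 (l2/2) ltac:(lra)) as [d K].
  assert (0 < d) by apply cond_pos.
  set (y0 := x + Rmin (d/2) ((b - x)/2)).
  assert (Rmin (d/2) ((b - x)/2) <= d/2) by apply Rmin_l.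
  assert (Rmin (d/2) ((b - x)/2) <= (b-x)/2) by apply Rmin_r.
  assert (0 < Rmin (d/2) ((b - x)/2)) by (apply Rmin_pos; lra).
  assert (Hpos : forall c, x < c <= y0 -> 0 < g' c).
  { intros c Hc. specialize (K (c - x) ltac:(lra)).
    rewrite Rabs_pos_eq in K by lra. specialize (K ltac:(unfold y0 in Hc; lra)).
    replace (x + (c - x)) with c in K by ring. rewrite H0 in K.
    apply Rabs_def2 in K. destruct K as [K1 K2].
    assert (0 < (g' c - 0) / (c - x)) by lra.
    unfold Rdiv in H4. apply Rmult_lt_reg_r with (/ (c - x)).
    apply Rinv_0_lt_compat; lra. lra. }
  destruct (MVT_cor2 g g' x y0) as [c [Hc Hc2]].
  - unfold y0; lra.
  - intros c Hc. apply Hd. unfold y0 in Hc; lra.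
  - specialize (Hpos c ltac:(lra)). specialize (Hm y0 ltac:(unfold y0; lra)).
    assert (0 < g' c * (y0 - x)) by (apply Rmult_lt_0_compat; unfold y0; lra). lra.
Qed.

Lemma time_max : forall g t0 T ts l, deriv_within g 0 T ts l -> 0 < ts <= t0 -> t0 <= T ->
  (forall s, 0 <= s <= t0 -> g s <= g ts) -> 0 <= l.
Proof.
  intros g t0 T ts l H Hts HT Hm.
  destruct (Rle_lt_dec 0 l) as [|Hl]; auto. exfalso.
  destruct (H (-l/2) ltac:(lra)) as [d [Hd K]].
  set (h := - Rmin (d/2) (ts/2)).
  assert (Rmin (d/2) (ts/2) <= d/2) by apply Rmin_l.
  assert (Rmin (d/2) (ts/2) <= ts/2) by apply Rmin_r.
  assert (0 < Rmin (d/2) (ts/2)) by (apply Rmin_pos; lra).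
  specialize (K h ltac:(unfold h; lra)).
  rewrite Rabs_left in K by (unfold h; lra).
  specialize (K ltac:(unfold h; lra) ltac:(unfold h; lra)).
  apply Rabs_def2 in K. destruct K as [K1 K2].
  specialize (Hm (ts + h) ltac:(unfold h; lra)).
  assert ((g (ts + h) - g ts) / h < 0) by lra.
  assert (0 <= (g (ts + h) - g ts) / h).
  { unfold Rdiv. replace ((g (ts + h) - g ts) * / h) with ((g ts - g (ts + h)) * / (-h)) by (field; unfold h; lra).
    apply Rmult_le_pos. lra. left; apply Rinv_0_lt_compat; unfold h; lra. }
  lra.
Qed.

Lemma cont_rect_plus : forall f g T, cont_rect f T -> cont_rect g T ->
  cont_rect (fun x t => f x t + g x t) T.
Proof.
  intros f g T Hf Hg x t Hxt eps He.
  destruct (Hf x t Hxt (eps/2) ltac:(lra)) as [d1 [Hd1 K1]].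
  destruct (Hg x t Hxt (eps/2) ltac:(lra)) as [d2 [Hd2 K2]].
  exists (Rmin d1 d2); split; [apply Rmin_pos; auto|].
  intros y s Hys Hy Hs.
  assert (Rabs (y - x) < d1) by (eapply Rlt_le_trans; [apply Hy|apply Rmin_l]).
  assert (Rabs (y - x) < d2) by (eapply Rlt_le_trans; [apply Hy|apply Rmin_r]).
  assert (Rabs (s - t) < d1) by (eapply Rlt_le_trans; [apply Hs|apply Rmin_l]).
  assert (Rabs (s - t) < d2) by (eapply Rlt_le_trans; [apply Hs|apply Rmin_r]).
  specialize (K1 y s Hys H H1). specialize (K2 y s Hys H0 H2).
  replace (f y s + g y s - (f x t + g x t)) with ((f y s - f x t) + (g y s - g x t)) by ring.
  eapply Rle_lt_trans; [apply Rabs_triang|]. lra.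
Qed.

Lemma cont_rect_lip : forall F T K, 0 <= K ->
  (forall x t y s, in_rect T x t -> in_rect T y s ->
     Rabs (F y s - F x t) <= K * (Rabs (y - x) + Rabs (s - t))) -> cont_rect F T.
Proof.
  intros F T K HK H x t Hxt eps He.
  exists (eps / (2 * (K + 1))). split.
  apply Rdiv_lt_0_compat; lra.
  intros y s Hys Hy Hs. eapply Rle_lt_trans; [apply H; auto|].
  assert (Hk : 0 < K + 1) by lra.
  pose proof (Rabs_pos (y - x)); pose proof (Rabs_pos (s - t)).
  apply Rle_lt_trans with ((K + 1) * (Rabs (y - x) + Rabs (s - t))).
  apply Rmult_le_compat_r; lra.
  apply Rlt_le_trans with ((K + 1) * (2 * (eps / (2 * (K + 1))))).
  apply Rmult_lt_compat_l; lra.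
  right; field; apply Rgt_not_eq; lra.
Qed.

Lemma cont_sub : forall g a b, cont_on_interval g 0 1 -> 0 <= a -> b <= 1 ->
  cont_on_interval g a b.
Proof.
  intros g a b H Ha Hb x Hx e He. destruct (H x ltac:(lra) e He) as [d [Hd K]].
  exists d; split; auto. intros y Hy Hyx. apply K; auto. lra.
Qed.

Lemma Rpower_pos : forall x y, 0 < Rpower x y.
Proof. intros; unfold Rpower; apply exp_pos. Qed.

Lemma Rpower_split : forall x g, 0 < x -> Rpower x g = x * Rpower x (g - 1).
Proof.
  intros x g Hx. replace g with (1 + (g - 1)) at 1 by ring.
  rewrite Rpower_plus, Rpower_1; auto.
Qed.

Lemma frac_le : forall a a' b b', 0 <= a' <= a -> 0 < b <= b' -> a' / b' <= a / b.
Proof.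
  intros a a' b b' Ha Hb. unfold Rdiv. apply Rmult_le_compat; try lra.
  left; apply Rinv_0_lt_compat; lra.
  apply Rinv_le_contravar; lra.
Qed.

Lemma arithQ : forall nu eps E exx om L vxx vx w,
  0 < nu -> 0 < eps -> 1/2 < E < 3/2 -> Rabs exx < om -> om * (48 * L) <= 1 -> 0 < L ->
  vxx <= - 2 * eps -> Rabs w <= 3 * L -> vx = - eps * w ->
  nu * ((vxx * E - exx * vx) / E²) <= - eps * nu.
Proof.
  intros nu eps E exx om L vxx vx w Hnu He HE Hx Hom HL Hv Hw Hvx.
  assert (HE2 : 0 < E²) by (unfold Rsqr; nra).
  assert (Hb : - exx * vx <= eps / 16).
  { rewrite Hvx. replace (- exx * (- eps * w)) with (eps * (exx * w)) by ring.
    assert (exx * w <= 1/16).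
    { apply Rle_trans with (Rabs (exx * w)). apply Rle_abs. rewrite Rabs_mult.
      apply Rle_trans with (om * (3 * L)). apply Rmult_le_compat; try apply Rabs_pos; lra. nra. }
    nra. }
  assert (vxx * E - exx * vx <= - eps * E²).
  { unfold Rsqr. assert (vxx * E <= - 2 * eps * E) by nra.
    assert (0 < eps * ((E - 1/2) * (3/2 - E))) by (apply Rmult_lt_0_compat; nra).
    nra. }
  apply Rle_trans with (nu * (- eps * E² / E²)).
  apply Rmult_le_compat_l; [lra|]. unfold Rdiv. apply Rmult_le_compat_r.
  left; apply Rinv_0_lt_compat; auto. auto.
  right. field. lra.
Qed.

Lemma arithP : forall gam lam rho Rr E RE R2 d exx P,
  0 < gam -> 0 < lam -> 0 < rho -> 0 < Rr -> 1/2 < E < 3/2 -> 0 < RE <= R2 ->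
  d / rho >= lam -> exx < lam / 4 ->
  P = ((gam * Rr * d) * (E * RE) - (gam * RE * exx) * (rho * Rr)) / (E * RE)² ->
  gam * lam / (16 * R2) * (Rr * rho) <= P.
Proof.
  intros gam lam rho Rr E RE R2 d exx P Hg Hl Hr HR HE HRE Hd Hx HP.
  assert (Hd2 : d >= lam * rho).
  { replace d with ((d / rho) * rho) by (field; lra). nra. }
  assert (HP2 : P = gam * Rr * (d * E - exx * rho) / (E * E * RE)).
  { rewrite HP. unfold Rsqr. field. split; apply Rgt_not_eq; lra. }
  rewrite HP2.
  replace (gam * lam / (16 * R2) * (Rr * rho)) with (gam * Rr * (lam * rho / 4) / (4 * R2))
    by (field; apply Rgt_not_eq; lra).
  apply frac_le.
  - assert (0 < gam * Rr) by (apply Rmult_lt_0_compat; lra).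
    assert (0 < lam * rho) by (apply Rmult_lt_0_compat; lra).
    split. apply Rmult_le_pos; lra.
    apply Rmult_le_compat_l. lra.
    assert (d * E >= lam * rho * E) by (apply Rmult_ge_compat_r; lra).
    assert (lam * rho * E >= lam * rho * (1/2)) by (apply Rmult_ge_compat_l; lra).
    assert (exx * rho <= lam / 4 * rho) by (apply Rmult_le_compat_r; lra).
    lra.
  - assert (0 < E * E) by nra. split. apply Rmult_lt_0_compat; lra.
    assert (E * E <= 4) by nra.
    apply Rmult_le_compat; lra.
Qed.
Lemma dw_refl0 : forall g x l, deriv_within g 0 1 (1 - x) l ->
  deriv_within (fun y => g (1 - y)) 0 1 x (- l).
Proof.
  intros g x l H eps He. destruct (H eps He) as [d [Hd K]].
  exists d; split; auto. intros h Hh Hhd Hr.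
  specialize (K (- h) ltac:(lra) ltac:(rewrite Rabs_Ropp; auto) ltac:(lra)).
  replace (1 - (x + h)) with (1 - x + - h) by ring.
  replace ((g (1 - x + - h) - g (1 - x)) / h - - l) with
    (- ((g (1 - x + - h) - g (1 - x)) / - h - l)) by (field; auto).
  rewrite Rabs_Ropp; auto.
Qed.

Lemma dw_refl : forall g x l a b, 0 <= x <= 1 -> deriv_within g 0 1 (1 - x) l ->
  deriv_within (fun y => a * g (1 - y) + b) 0 1 x (- (a * l)).
Proof.
  intros g x l a b Hx H.
  apply dw_ext with (f := fun y => a * g (1 - y) + (0 * y + b)) (l := a * (- l) + 0); auto.
  apply dw_plus. apply (dw_scal (fun y => g (1 - y))). apply dw_refl0; auto.
  apply dw_affine_fun. intros; ring. ring.
Qed.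

Lemma dw_lin : forall g a0 b0 x l a b, a0 <= x <= b0 -> deriv_within g a0 b0 x l ->
  deriv_within (fun y => a * g y + b) a0 b0 x (a * l).
Proof.
  intros g a0 b0 x l a b Hx H.
  apply dw_ext with (f := fun y => a * g y + (0 * y + b)) (l := a * l + 0); auto.
  - apply dw_plus. apply dw_scal; auto. apply dw_affine_fun.
  - intros; ring.
  - ring.
Qed.

Lemma cont_rect_refl : forall f T a b, cont_rect f T ->
  cont_rect (fun x t => a * f (1 - x) t + b) T.
Proof.
  intros f T a b Hc x t [Hx Ht] eps He.
  assert (Ha : 0 < Rabs a + 1) by (pose proof (Rabs_pos a); lra).
  destruct (Hc (1 - x) t ltac:(split; lra) (eps / (Rabs a + 1)) ltac:(apply Rdiv_lt_0_compat; lra))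
    as [d [Hd K]].
  exists d; split; auto. intros y s [Hy Hs] Hyx Hst.
  specialize (K (1 - y) s ltac:(split; lra) ltac:(replace (1 - y - (1 - x)) with (- (y - x)) by ring; rewrite Rabs_Ropp; auto) Hst).
  replace (a * f (1 - y) s + b - (a * f (1 - x) t + b)) with (a * (f (1 - y) s - f (1 - x) t)) by ring.
  rewrite Rabs_mult. pose proof (Rabs_pos a). pose proof (Rabs_pos (f (1 - y) s - f (1 - x) t)).
  apply Rle_lt_trans with ((Rabs a + 1) * Rabs (f (1 - y) s - f (1 - x) t)).
  apply Rmult_le_compat_r; lra.
  apply Rlt_le_trans with ((Rabs a + 1) * (eps / (Rabs a + 1))).
  apply Rmult_lt_compat_l; lra. right; field; lra.
Qed.

Lemma dpl_refl : forall F x l, derivable_pt_lim F (1 - x) l ->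
  derivable_pt_lim (fun y => F (1 - y)) x (- l).
Proof.
  intros F x l H.
  replace (- l) with (l * (2 * 0 * x + -1)) by ring.
  apply dpl_ext with (f := comp F (fun y => 0 * (y * y) + -1 * y + 1)).
  apply (derivable_pt_lim_comp (fun y => 0 * (y * y) + -1 * y + 1) F).
  apply dpl_quad.
  replace (0 * (x * x) + -1 * x + 1) with (1 - x) by ring. auto.
  intros y; unfold comp. f_equal; ring.
Qed.

Lemma in_rect_refl : forall T x t, in_rect T x t -> in_rect T (1 - x) t.
Proof. intros T x t [H1 H2]; split; lra. Qed.

Lemma reflect_sol : forall nu gamma rho0 u0 T v eta,
  is_solution nu gamma rho0 u0 T v eta ->
  is_solution nu gamma (fun x => rho0 (1 - x)) (fun x => - u0 (1 - x)) T
    (fun x t => -1 * v (1 - x) t + 0) (fun x t => -1 * eta (1 - x) t + 1).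
Proof.
  intros nu gamma rho0 u0 T v eta
    [vx [vxx [vt [ex [exx [et [[Hv1 [Hv2 [Hv3 [Cv [Cvx [Cvxx Cvt]]]]]]
    [[He1 [He2 [He3 [Ce [Cex [Cexx Cet]]]]]] [Hexpos [Heq [Het [Hinit Hbd]]]]]]]]]]]].
  exists (fun x t => 1 * vx (1 - x) t + 0), (fun x t => -1 * vxx (1 - x) t + 0),
    (fun x t => -1 * vt (1 - x) t + 0),
    (fun x t => 1 * ex (1 - x) t + 0), (fun x t => -1 * exx (1 - x) t + 0),
    (fun x t => -1 * et (1 - x) t + 0).
  repeat split.
  - intros x t Hxt. eapply dw_ext. apply Hxt. apply (dw_refl (fun y => v y t) x (vx (1 - x) t) (-1) 0).
    apply Hxt. apply Hv1, in_rect_refl; auto. intros; reflexivity. ring.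
  - intros x t Hxt. eapply dw_ext. apply Hxt. apply (dw_refl (fun y => vx y t) x (vxx (1 - x) t) 1 0).
    apply Hxt. apply Hv2, in_rect_refl; auto. intros; reflexivity. ring.
  - intros x t Hxt. eapply dw_ext. apply (proj2 Hxt). apply (dw_lin (fun s => v (1 - x) s) 0 T t (vt (1 - x) t) (-1) 0). apply Hxt. apply Hv3, in_rect_refl; auto. intros; reflexivity. ring.
  - apply cont_rect_refl; auto.
  - apply cont_rect_refl; auto.
  - apply cont_rect_refl; auto.
  - apply cont_rect_refl; auto.
  - intros x t Hxt. eapply dw_ext. apply Hxt. apply (dw_refl (fun y => eta y t) x (ex (1 - x) t) (-1) 1).
    apply Hxt. apply He1, in_rect_refl; auto. intros; reflexivity. ring.
  - intros x t Hxt. eapply dw_ext. apply Hxt. apply (dw_refl (fun y => ex y t) x (exx (1 - x) t) 1 0).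
    apply Hxt. apply He2, in_rect_refl; auto. intros; reflexivity. ring.
  - intros x t Hxt. eapply dw_ext. apply (proj2 Hxt). apply (dw_lin (fun s => eta (1 - x) s) 0 T t (et (1 - x) t) (-1) 1). apply Hxt. apply He3, in_rect_refl; auto. intros; reflexivity. ring.
  - apply cont_rect_refl; auto.
  - apply cont_rect_refl; auto.
  - apply cont_rect_refl; auto.
  - apply cont_rect_refl; auto.
  - intros x t Hx Ht. pose proof (Hexpos (1 - x) t ltac:(lra) Ht). lra.
  - intros x t Hx Ht. destruct (Heq (1 - x) t ltac:(lra) Ht) as [P [Q [HP [HQ HE]]]].
    exists (- P), (- Q). split; [|split].
    + apply dpl_ext with (f := fun y => (fun z => Rpower (rho0 z) gamma / Rpower (ex z t) gamma) (1 - y)).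
      apply (dpl_refl (fun z => Rpower (rho0 z) gamma / Rpower (ex z t) gamma)); auto.
      intros y. rewrite Rmult_1_l, Rplus_0_r. reflexivity.
    + apply dpl_ext with (f := fun y => (fun z => vx z t / ex z t) (1 - y)).
      apply (dpl_refl (fun z => vx z t / ex z t)); auto.
      intros y. rewrite !Rmult_1_l, !Rplus_0_r. reflexivity.
    + replace (nu * - Q) with (- (nu * Q)) by ring. rewrite <- HE. ring.
  - intros x t Hx Ht. rewrite Het by lra. ring.
  - rewrite (proj1 (Hinit (1 - x) ltac:(lra))). ring.
  - rewrite (proj2 (Hinit (1 - x) ltac:(lra))). ring.
  - replace (1 - 0) with 1 by ring. rewrite (proj1 (proj2 (proj2 (Hbd t H)))). ring.
  - replace (1 - 0) with 1 by ring. rewrite (proj2 (proj2 (proj2 (Hbd t H)))). ring.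
  - replace (1 - 1) with 0 by ring. rewrite (proj1 (Hbd t H)). ring.
  - replace (1 - 1) with 0 by ring. rewrite (proj1 (proj2 (Hbd t H))). ring.
Qed.
Lemma core (nu gamma : R) (rho0 u0 : R -> R) (lam L T : R) :
  0 < nu -> 1 < gamma -> cont_on_interval rho0 0 1 ->
  (forall x, 0 < x < 1 -> 0 < rho0 x) -> rho0 0 = 0 -> 0 < lam -> 0 < L < 1 ->
  (forall x, 0 < x < L -> exists d, derivable_pt_lim rho0 x d /\ d / rho0 x >= lam) ->
  u0 L < 0 -> (forall x, 0 < x < L -> u0 x <= 0) -> 0 < T ->
  ~ exists v eta, is_solution nu gamma rho0 u0 T v eta.
Proof.
  intros Hnu Hg Hrc Hrp Hr0 Hl1 Hl3 Hlam Hu3 Hu0 HT.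
  intros [v [eta [vx [vxx [vt [ex [exx [et [[Hv1 [Hv2 [Hv3 [Cv [Cvx [Cvxx Cvt]]]]]]
    [[He1 [He2 [He3 [Ce [Cex [Cexx Cet]]]]]] [Hexpos [Heq [Het [Hinit Hbd]]]]]]]]]]]]]].
  assert (HL : 0 < L < 1) by exact Hl3.
  assert (ex0 : forall x, 0 < x < 1 -> ex x 0 = 1).
  { intros x Hx. apply (dw_affine (fun y => eta y 0) 0 1 x (ex x 0) 1 0); auto.
    apply He1. split; lra. intros y Hy. rewrite (proj2 (Hinit y Hy)); ring. }
  assert (exx0 : forall x, 0 < x < 1 -> exx x 0 = 0).
  { intros x Hx. apply (dw_affine (fun y => ex y 0) 0 1 x (exx x 0) 0 1); auto.
    apply He2. split; lra. intros y Hy. rewrite ex0; auto; ring. }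
  set (om := Rmin (lam / 4) (1 / (48 * L))).
  assert (Hom0 : 0 < om) by (apply Rmin_pos; [lra| apply Rdiv_lt_0_compat; lra]).
  assert (Hom1 : om <= lam / 4) by apply Rmin_l.
  assert (Hom2 : om * (48 * L) <= 1).
  { assert (om <= 1 / (48 * L)) by apply Rmin_r.
    apply Rle_trans with (1 / (48 * L) * (48 * L)).
    apply Rmult_le_compat_r; lra. right; field; lra. }
  destruct (UC_rect ex T Cex (1/2) ltac:(lra)) as [d1 [Hd1 K1]].
  destruct (UC_rect exx T Cexx om Hom0) as [d2 [Hd2 K2]].
  assert (Cv0 := Cv L 0 ltac:(split; lra) (- u0 L / 2) ltac:(lra)).
  destruct Cv0 as [d3 [Hd3 K3]].
  set (t0 := Rmin (Rmin d1 d2) (Rmin d3 T) / 2).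
  assert (Ht0 : 0 < t0).
  { unfold t0. assert (0 < Rmin (Rmin d1 d2) (Rmin d3 T)) by (repeat apply Rmin_pos; lra). lra. }
  assert (Ht01 : t0 < d1 /\ t0 < d2 /\ t0 < d3 /\ t0 < T).
  { unfold t0. pose proof (Rmin_l (Rmin d1 d2) (Rmin d3 T)). pose proof (Rmin_r (Rmin d1 d2) (Rmin d3 T)).
    pose proof (Rmin_l d1 d2). pose proof (Rmin_r d1 d2). pose proof (Rmin_l d3 T). pose proof (Rmin_r d3 T).
    assert (0 < Rmin (Rmin d1 d2) (Rmin d3 T)) by (repeat apply Rmin_pos; lra). lra. }
  assert (Bex : forall x t, 0 < x < 1 -> 0 <= t <= t0 -> 1/2 < ex x t < 3/2).
  { intros x t Hx Ht. assert (Rabs (ex x t - ex x 0) < 1/2).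
    apply K1; try (split; lra). rewrite Rminus_diag, Rabs_R0; lra.
    rewrite Rminus_0_r, Rabs_pos_eq; lra.
    rewrite ex0 in H; auto. apply Rabs_def2 in H. lra. }
  assert (Bexx : forall x t, 0 < x < 1 -> 0 <= t <= t0 -> Rabs (exx x t) < om).
  { intros x t Hx Ht. assert (Rabs (exx x t - exx x 0) < om).
    apply K2; try (split; lra). rewrite Rminus_diag, Rabs_R0; lra.
    rewrite Rminus_0_r, Rabs_pos_eq; lra.
    rewrite exx0, Rminus_0_r in H; auto. }
  assert (BvL : forall t, 0 <= t <= t0 -> v L t < u0 L / 2).
  { intros t Ht. assert (Rabs (v L t - v L 0) < - u0 L / 2).
    apply K3; try (split; lra). rewrite Rminus_diag, Rabs_R0; lra.
    rewrite Rminus_0_r, Rabs_pos_eq; lra.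
    rewrite (proj1 (Hinit L HL)) in H. apply Rabs_def2 in H. lra. }
  set (c := 2 * L / t0).
  assert (Hc : 0 < c) by (unfold c; apply Rdiv_lt_0_compat; lra).
  assert (Hct0 : c * t0 = 2 * L) by (unfold c; field; lra).
  assert (Hnc : 0 < nu / (2 * c * L)) by (apply Rdiv_lt_0_compat; [lra| apply Rmult_lt_0_compat; lra]).
  destruct (Hrc 0 ltac:(lra) _ Hnc) as [d4 [Hd4 K4]].
  set (dl := Rmin d4 L / 2).
  assert (Hdl : 0 < dl /\ dl < L /\ dl < d4).
  { unfold dl. pose proof (Rmin_l d4 L). pose proof (Rmin_r d4 L).
    assert (0 < Rmin d4 L) by (apply Rmin_pos; lra). lra. }
  assert (Bsmall : forall y, 0 < y <= dl -> rho0 y < nu / (2 * c * L)).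
  { intros y Hy. assert (Rabs (rho0 y - rho0 0) < nu / (2 * c * L)).
    apply K4. lra. rewrite Rminus_0_r, Rabs_pos_eq; lra.
    rewrite Hr0, Rminus_0_r in H. apply Rabs_def2 in H. lra. }
  destruct (EVT_min rho0 dl L ltac:(lra) (cont_sub rho0 dl L Hrc ltac:(lra) ltac:(lra)))
    as [xm [Hxm Hmin]].
  set (rmin := rho0 xm).
  assert (Hrmin : 0 < rmin) by (apply Hrp; lra).
  destruct (EVT_max rho0 0 1 ltac:(lra) Hrc) as [xM [HxM Hmaxr]].
  set (rmax := rho0 xM).
  assert (Hrmax : 0 < rmax) by (pose proof (Hmaxr L ltac:(lra)); pose proof (Hrp L HL); unfold rmax; lra).
  set (R2 := Rpower 2 (gamma - 1)).
  assert (HR2 : 0 < R2) by apply Rpower_pos.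
  set (K0 := gamma * lam / (16 * R2)).
  assert (HK0 : 0 < K0) by (unfold K0; apply Rdiv_lt_0_compat; [apply Rmult_lt_0_compat|]; lra).
  set (pmin := K0 * (Rpower rmin (gamma - 1) * rmin)).
  assert (Hpmin : 0 < pmin).
  { unfold pmin. apply Rmult_lt_0_compat; auto. apply Rmult_lt_0_compat; auto. apply Rpower_pos. }
  set (B := rmax * c * L + 1).
  assert (HB : 0 < B) by (unfold B; assert (0 < rmax * c * L) by (apply Rmult_lt_0_compat; [apply Rmult_lt_0_compat|]; lra); lra).
  set (eps := Rmin (pmin / (2 * B)) (- u0 L / (8 * L * L))).
  assert (Heps : 0 < eps).
  { unfold eps; assert (0 < L * L) by nra.
    apply Rmin_pos; apply Rdiv_lt_0_compat; lra. }
  assert (Heps1 : eps * (2 * B) <= pmin).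
  { assert (eps <= pmin / (2 * B)) by apply Rmin_r || apply Rmin_l.
    apply Rle_trans with (pmin / (2 * B) * (2 * B)). apply Rmult_le_compat_r; lra.
    right; field; lra. }
  assert (Heps2 : eps * (8 * L * L) <= - u0 L).
  { assert (eps <= - u0 L / (8 * L * L)) by apply Rmin_r.
    assert (0 < 8 * L * L) by nra.
    apply Rle_trans with (- u0 L / (8 * L * L) * (8 * L * L)). apply Rmult_le_compat_r; lra.
    right; field; lra. }
  set (z := fun x t => v x t + eps * (x * x - L * x + c * t * x)).
  assert (Cz : cont_rect z T).
  { apply cont_rect_plus; auto.
    apply cont_rect_lip with (K := eps * (2 + L + c * T + c)).
    { apply Rmult_le_pos; nra. }
    intros x t y s [Hx Ht] [Hy Hs].
    replace (eps * (y * y - L * y + c * s * y) - eps * (x * x - L * x + c * t * x))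
      with (eps * ((y - x) * (y + x - L + c * s) + c * x * (s - t))) by ring.
    rewrite Rabs_mult, (Rabs_pos_eq eps) by lra.
    assert (A1 : Rabs ((y - x) * (y + x - L + c * s)) <= Rabs (y - x) * (2 + L + c * T)).
    { rewrite Rabs_mult. apply Rmult_le_compat_l. apply Rabs_pos.
      apply Rabs_le. assert (c * s <= c * T) by (apply Rmult_le_compat_l; lra).
      assert (0 <= c * s) by nra. lra. }
    assert (A2 : Rabs (c * x * (s - t)) <= c * Rabs (s - t)).
    { rewrite !Rabs_mult, (Rabs_pos_eq c), (Rabs_pos_eq x) by lra.
      assert (0 <= Rabs (s - t)) by apply Rabs_pos.
      assert (c * x <= c) by (rewrite <- (Rmult_1_r c) at 2; apply Rmult_le_compat_l; lra).
      apply Rmult_le_compat_r; lra. }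
    pose proof (Rabs_triang ((y - x) * (y + x - L + c * s)) (c * x * (s - t))).
    pose proof (Rabs_pos (y - x)). pose proof (Rabs_pos (s - t)).
    assert (0 <= c * T) by nra.
    apply Rmult_le_compat_l with (r := eps) in H; [|lra].
    eapply Rle_trans; [apply H|].
    replace (eps * (2 + L + c * T + c) * (Rabs (y - x) + Rabs (s - t))) with
      (eps * ((2 + L + c * T + c) * (Rabs (y - x) + Rabs (s - t)))) by ring.
    apply Rmult_le_compat_l; [lra|].
    assert (0 <= Rabs (y - x) * c) by (apply Rmult_le_pos; lra).
    assert (0 <= Rabs (s - t) * (2 + L + c * T)) by (apply Rmult_le_pos; lra).
    lra. }
  destruct (max_2d z T L t0 Cz ltac:(lra) ltac:(lra)) as [xs [ts [Hxs [Hts Hmax]]]].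
  assert (v00 : v 0 0 = 0).
  { apply abs_small_zero. intros e He.
    destruct (Cv 0 0 ltac:(split; lra) e He) as [d [Hd K]].
    set (s := Rmin d T / 2).
    assert (0 < s /\ s < d /\ s < T).
    { unfold s. pose proof (Rmin_l d T). pose proof (Rmin_r d T).
      assert (0 < Rmin d T) by (apply Rmin_pos; lra). lra. }
    assert (Rabs (v 0 s - v 0 0) < e).
    apply K. split; lra. rewrite Rminus_diag, Rabs_R0; lra. rewrite Rminus_0_r, Rabs_pos_eq; lra.
    rewrite (proj1 (Hbd s ltac:(lra))) in H0. rewrite Rminus_0_l, Rabs_Ropp in H0. auto. }
  assert (Zle : z xs ts <= 0).
  { destruct (Req_dec xs 0) as [Ex|Ex].
    { subst xs. unfold z. destruct (Req_dec ts 0) as [Et|Et].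
      - subst ts. rewrite v00. lra.
      - rewrite (proj1 (Hbd ts ltac:(lra))). lra. }
    destruct (Req_dec xs L) as [EL|EL].
    { subst xs. unfold z. pose proof (BvL ts Hts).
      assert (c * ts <= c * t0) by (apply Rmult_le_compat_l; lra).
      assert (eps * (L * L - L * L + c * ts * L) <= eps * (2 * L * L)).
      { apply Rmult_le_compat_l. lra. assert (c * ts * L <= 2 * L * L) by (apply Rmult_le_compat_r; lra). lra. }
      lra. }
    destruct (Req_dec ts 0) as [Et|Et].
    { subst ts. unfold z. rewrite (proj1 (Hinit xs ltac:(lra))).
      pose proof (Hu0 xs ltac:(lra)).
      assert (eps * (xs * xs - L * xs + c * 0 * xs) <= 0).
      { replace (xs * xs - L * xs + c * 0 * xs) with (xs * (xs - L)) by ring.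
        assert (xs * (xs - L) <= 0) by nra. nra. }
      lra. }
    exfalso.
    assert (Hxs1 : 0 < xs < L) by lra.
    assert (Hts1 : 0 < ts <= t0) by lra.
    assert (Hin : in_rect T xs ts) by (split; lra).
    pose proof (Bex xs ts ltac:(lra) ltac:(lra)) as BE.
    pose proof (Bexx xs ts ltac:(lra) ltac:(lra)) as BX.
    set (gx := fun y => vx y ts + (2 * eps * y + eps * (c * ts - L))).
    assert (Dz : forall y, 0 < y < 1 -> derivable_pt_lim (fun y => z y ts) y (gx y)).
    { intros y Hy. unfold gx.
      apply dpl_ext with (f := fun y => v y ts + (eps * (y * y) + eps * (c * ts - L) * y + 0)).
      apply derivable_pt_lim_plus. apply dw_interior with 0 1; [apply Hv1; split; lra| lra].
      apply dpl_quad.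
      intros y'; unfold z; ring. }
    assert (Hzx : forall y, 0 < y < L -> z y ts <= z xs ts) by (intros; apply Hmax; lra).
    assert (H1 : gx xs = 0) by (apply (max_deriv0 (fun y => z y ts) 0 L xs); auto; apply Dz; lra).
    assert (H2 : vxx xs ts + 2 * eps <= 0).
    { apply (max_deriv2 (fun y => z y ts) gx 0 L xs); auto.
      intros y Hy; apply Dz; lra.
      assert (derivable_pt_lim gx xs (vxx xs ts + (2 * 0 * xs + 2 * eps))).
      { unfold gx. apply dpl_ext with (f := fun y => vx y ts + (0 * (y * y) + (2 * eps) * y + eps * (c * ts - L))).
        apply derivable_pt_lim_plus. apply dw_interior with 0 1; [apply Hv2; split; lra| lra].
        apply dpl_quad. intros; ring. }
      replace (vxx xs ts + 2 * eps) with (vxx xs ts + (2 * 0 * xs + 2 * eps)) by ring. auto. }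
    assert (H3 : 0 <= vt xs ts + eps * c * xs).
    { apply (time_max (fun s => z xs s) t0 T ts).
      - apply dw_ext with (f := fun s => v xs s + (eps * c * xs * s + eps * (xs * xs - L * xs))) (l := vt xs ts + eps * c * xs).
        lra. apply dw_plus. apply Hv3; auto. apply dw_affine_fun.
        intros y Hy. unfold z. ring. reflexivity.
      - lra.
      - lra.
      - intros s0 Hs0. apply Hmax; lra. }
    destruct (Heq xs ts ltac:(lra) ltac:(lra)) as [P [Q [HP [HQ Heqn]]]].
    set (E := ex xs ts) in *.
    assert (HE0 : E <> 0) by lra.
    assert (HQv : Q = (vxx xs ts * E - exx xs ts * vx xs ts) / E²).
    { apply (uniqueness_limite (fun y => vx y ts / ex y ts) xs); auto.
      apply (derivable_pt_lim_div (fun y => vx y ts) (fun y => ex y ts)); auto.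
      apply dw_interior with 0 1; [apply Hv2; split; lra| lra].
      apply dw_interior with 0 1; [apply He2; split; lra| lra]. }
    destruct (Hlam xs Hxs1) as [d [Hd Hdlam]].
    set (rho := rho0 xs) in *.
    assert (Hrho : 0 < rho) by (apply Hrp; lra).
    assert (HPv : P = ((gamma * Rpower rho (gamma - 1) * d) * Rpower E gamma -
                      (gamma * Rpower E (gamma - 1) * exx xs ts) * Rpower rho gamma) / (Rpower E gamma)²).
    { apply (uniqueness_limite (fun y => Rpower (rho0 y) gamma / Rpower (ex y ts) gamma) xs); auto.
      apply (derivable_pt_lim_div (fun y => Rpower (rho0 y) gamma) (fun y => Rpower (ex y ts) gamma)).
      - apply (derivable_pt_lim_comp rho0 (fun r => Rpower r gamma)); auto.
        apply derivable_pt_lim_power; auto.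
      - apply (derivable_pt_lim_comp (fun y => ex y ts) (fun r => Rpower r gamma)).
        apply dw_interior with 0 1; [apply He2; split; lra| lra].
        apply derivable_pt_lim_power; unfold E in *; lra.
      - pose proof (Rpower_pos (ex xs ts) gamma). lra. }
    assert (HRr : 0 < Rpower rho (gamma - 1)) by apply Rpower_pos.
    assert (HRE : 0 < Rpower E (gamma - 1) <= R2).
    { split. apply Rpower_pos. unfold R2; apply Rle_Rpower_l; lra. }
    rewrite (Rpower_split rho gamma Hrho), (Rpower_split E gamma) in HPv by lra.
    assert (Hxx : exx xs ts < lam / 4) by (apply Rabs_def2 in BX; lra).
    pose proof (arithP gamma lam rho (Rpower rho (gamma - 1)) E (Rpower E (gamma - 1)) R2 d (exx xs ts) P
       ltac:(lra) Hl1 Hrho HRr ltac:(lra) HRE Hdlam Hxx HPv) as Hlow.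
    change (gamma * lam / (16 * R2)) with K0 in Hlow.
    assert (HQb : nu * Q <= - eps * nu).
    { rewrite HQv. apply (arithQ nu eps E (exx xs ts) om L (vxx xs ts) (vx xs ts) (2 * xs - L + c * ts)); auto; try lra.
      - assert (c * ts <= c * t0) by (apply Rmult_le_compat_l; lra).
        assert (0 <= c * ts) by (apply Rmult_le_pos; lra).
        apply Rabs_le; lra.
      - unfold gx in H1. lra. }
    assert (Hvt : rho * vt xs ts >= - (rho * (eps * c * xs))).
    { assert (rho * (vt xs ts + eps * c * xs) >= 0) by (apply Rle_ge, Rmult_le_pos; lra). nra. }
    assert (Hcx : rho * (eps * c * xs) <= rho * (eps * c * L)).
    { apply Rmult_le_compat_l. lra. apply Rmult_le_compat_l. apply Rmult_le_pos; lra. lra. }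
    assert (Pup : P <= - eps * nu + rho * (eps * c * L)) by lra.
    destruct (Rle_lt_dec xs dl) as [Hsm|Hbg].
    - pose proof (Bsmall xs ltac:(lra)) as Hs. fold rho in Hs.
      assert (rho * (c * L) < nu / 2).
      { apply Rlt_le_trans with (nu / (2 * c * L) * (c * L)).
        apply Rmult_lt_compat_r. apply Rmult_lt_0_compat; lra. auto.
        right; field; split; apply Rgt_not_eq; lra. }
      assert (rho * (eps * c * L) < eps * (nu / 2)).
      { replace (rho * (eps * c * L)) with (eps * (rho * (c * L))) by ring.
        apply Rmult_lt_compat_l; lra. }
      assert (0 < K0 * (Rpower rho (gamma - 1) * rho)).
      { apply Rmult_lt_0_compat; auto. apply Rmult_lt_0_compat; auto. }
      assert (0 < eps * nu) by (apply Rmult_lt_0_compat; lra). assert (eps * (nu / 2) = eps * nu / 2) by field. lra.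
    - pose proof (Hmin xs ltac:(lra)) as Hm. fold rho in Hm. fold rmin in Hm.
      pose proof (Hmaxr xs ltac:(lra)) as HM. fold rho in HM. fold rmax in HM.
      assert (Rpower rmin (gamma - 1) <= Rpower rho (gamma - 1)) by (apply Rle_Rpower_l; lra).
      assert (pmin <= K0 * (Rpower rho (gamma - 1) * rho)).
      { unfold pmin. apply Rmult_le_compat_l. lra.
        apply Rmult_le_compat; try lra. left; apply Rpower_pos. }
      assert (rho * (eps * c * L) <= eps * (rmax * c * L)).
      { replace (rho * (eps * c * L)) with (eps * (rho * (c * L))) by ring.
        replace (rmax * c * L) with (rmax * (c * L)) by ring.
        apply Rmult_le_compat_l. lra. apply Rmult_le_compat_r. apply Rmult_le_pos; lra. lra. }
      assert (eps * (rmax * c * L) < eps * B) by (apply Rmult_lt_compat_l; unfold B; lra).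
      assert (0 < eps * nu) by (apply Rmult_lt_0_compat; lra).
      lra. }
  assert (Zall : forall x t, 0 <= x <= L -> 0 <= t <= t0 -> z x t <= 0).
  { intros x t Hx Ht. pose proof (Hmax x t Hx Ht). lra. }
  destruct (Hbd t0 ltac:(lra)) as [Hv0 [Hvx0 _]].
  assert (HeL : 0 < eps * L / 2) by (apply Rdiv_lt_0_compat; [apply Rmult_lt_0_compat|]; lra).
  destruct (Hv1 0 t0 ltac:(split; lra) (eps * L / 2) HeL) as [d [Hd K]].
  set (y := Rmin d L / 2).
  assert (Hy : 0 < y /\ y < d /\ y < L).
  { unfold y. pose proof (Rmin_l d L). pose proof (Rmin_r d L).
    assert (0 < Rmin d L) by (apply Rmin_pos; lra). lra. }
  specialize (K y ltac:(lra)). rewrite Rabs_pos_eq in K by lra.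
  specialize (K ltac:(lra) ltac:(lra)).
  rewrite Rplus_0_l, Hv0, Hvx0, !Rminus_0_r in K.
  apply Rabs_def2 in K. destruct K as [_ K].
  assert (Hvy : - (eps * L / 2) * y < v y t0).
  { apply Rmult_lt_compat_r with (r := y) in K; [|lra].
    replace (v y t0 / y * y) with (v y t0) in K by (field; lra). lra. }
  pose proof (Zall y t0 ltac:(lra) ltac:(lra)) as Z. unfold z in Z.
  replace (c * t0 * y) with (2 * L * y) in Z by (rewrite Hct0; ring).
  assert (0 < eps * (y * y)) by (apply Rmult_lt_0_compat; nra).
  assert (0 < eps * L * y) by (apply Rmult_lt_0_compat; [apply Rmult_lt_0_compat|]; lra).
  nra.
Qed.

Theorem theorem2p2 (nu gamma : R) (rho0 u0 : R -> R)
  (Hnu : 0 < nu) (Hgamma : 1 < gamma)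
  (Hrho_cont : cont_on_interval rho0 0 1)
  (Hrho_pos : forall x, 0 < x < 1 -> 0 < rho0 x)
  (Hrho_bd : rho0 0 = 0 /\ rho0 1 = 0)
  (Hu0_cont : cont_on_interval u0 0 1)
  (Hlam : exists l1 l2 l3 l4 : R,
     0 < l1 /\ 0 < l2 /\ 0 < l3 < 1 /\ 0 < l4 < 1 /\
     ( ( (forall x, 0 < x < l3 ->
            exists d, derivable_pt_lim rho0 x d /\ d / rho0 x >= l1) /\
         u0 l3 < 0 /\ (forall x, 0 < x < l3 -> u0 x <= 0) )
     \/
       ( (forall x, l4 < x < 1 ->
            exists d, derivable_pt_lim rho0 x d /\ d / rho0 x <= - l2) /\
         u0 l4 > 0 /\ (forall x, l4 < x < 1 -> u0 x >= 0) ) )) :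
  forall T : R, 0 < T ->
    ~ exists v eta : R -> R -> R, is_solution nu gamma rho0 u0 T v eta.
Proof.
  intros T HT.
  destruct Hlam as [l1 [l2 [l3 [l4 [H1 [H2 [H3 [H4 [[Hd [Hu Hu']] | [Hd [Hu Hu']]]]]]]]]]].
  - apply (core nu gamma rho0 u0 l1 l3 T); auto. apply Hrho_bd.
  - intros [v [eta Hs]].
    apply (core nu gamma (fun x => rho0 (1 - x)) (fun x => - u0 (1 - x)) l2 (1 - l4) T); auto; try lra.
    + intros x Hx e He. destruct (Hrho_cont (1 - x) ltac:(lra) e He) as [d [Hd0 K]].
      exists d; split; auto. intros y Hy Hyx. apply K. lra.
      replace (1 - y - (1 - x)) with (- (y - x)) by ring. rewrite Rabs_Ropp; auto.
    + intros x Hx. apply Hrho_pos; lra.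
    + replace (1 - 0) with 1 by ring. apply Hrho_bd.
    + intros x Hx. destruct (Hd (1 - x) ltac:(lra)) as [d [Hdd Hdl]].
      exists (- d). split. apply (dpl_refl rho0 x d Hdd).
      assert (0 < rho0 (1 - x)) by (apply Hrho_pos; lra).
      replace (- d / rho0 (1 - x)) with (- (d / rho0 (1 - x))) by (field; lra). lra.
    + replace (1 - (1 - l4)) with l4 by ring. lra.
    + intros x Hx. pose proof (Hu' (1 - x) ltac:(lra)). lra.
    + exists (fun x t => -1 * v (1 - x) t + 0), (fun x t => -1 * eta (1 - x) t + 1).
      apply reflect_sol; auto.
Qed.
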